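(* Let $K\ge 1$ and $M_\text{t}\ge 2$ be integers and let $P_\text{t}>0$, $P_\mathsf{max}>0$, $N_0>0$, $\tau>0$ and $\beta_1,\dots,\beta_K>0$. For a beacon power vector $\mathbf{p}=[p_1,\dots,p_K]^T$ with $0\le p_k\le P_\mathsf{max}$, define the harvested power of receiver $k$ by $$Q_k(\mathbf{p}) = P_\text{t}\beta_k + P_\text{t}\frac{p_k\beta_k^2(M_\text{t}-1)}{\sum_{l=1}^K p_l\beta_l + \frac{N_0}{\tau}},\qquad k=1,\dots,K,$$ and set $q_k(\mathbf{p}) = Q_k(\mathbf{p}) - P_\text{t}\beta_k$. Let targets $\bar Q_1,\dots,\bar Q_K$ satisfy $\bar Q_k\ge P_\text{t}\beta_k$ and put $\bar q_k=\bar Q_k-P_\text{t}\beta_k$. Starting from any initial vector $\mathbf{p}[1]$ with $0<p_k[1]\le P_\mathsf{max}$ for all $k$, consider the iteration $$p_k[n+1]=\min\left\{P_\mathsf{max},\ \frac{\bar q_k}{q_k(\mathbf{p}[n])}\,p_k[n]\right\},\qquad k=1,\dots,K,\ n\ge 1.$$ Then $\mathbf{p}[n]$ converges to a unique fixed-point solution $\mathbf{p}^\star=[p_1^\star,\dots,p_K^\star]^T$, such that every $k$ with $p_k^\star<P_\mathsf{max}$ satisfies $Q_k(\mathbf{p}^\star)=\bar Q_k$, and every $k$ with $p_k^\star=P_\mathsf{max}$ satisfies $Q_k(\mathbf{p}^\star)\le\bar Q_k$.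
   Context: Setting: an energy transmitter with $M_\text{t}$ antennas and total transmit power $P_\text{t}$ serves $K$ single-antenna energy receivers via retrodirective beamforming; receiver $k$ sends an uplink beacon of power $p_k\in[0,P_\mathsf{max}]$ for duration $\tau$, $N_0$ is the noise power spectral density, and $\beta_k$ is the large-scale channel attenuation of receiver $k$. The formula for $Q_k(\mathbf{p})$ above is the paper's (large-antenna) model of the power harvested by receiver $k$, and the iteration is the distributed beacon power update in which each receiver updates its beacon power once per block $n$. *)

(* Defs.v *)
From HB Require Import structures.
From mathcomp Require Import all_boot all_order all_algebra.
From mathcomp Require Import all_classical all_reals all_analysis.
Set Implicit Arguments. Unset Strict Implicit. Unset Printing Implicit Defensive.
Import Order.TTheory GRing.Theory Num.Theory.
Local Open Scope ring_scope.

Definition Qh (R : realType) (K M : nat) (Pt N0 tau : R) (beta : 'I_K -> R)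
  (p : 'I_K -> R) (k : 'I_K) : R :=
  Pt * beta k + Pt * (p k * beta k ^+ 2 * (M%:R - 1))
                     / (\sum_(l < K) p l * beta l + N0 / tau).

Definition qh (R : realType) (K M : nat) (Pt N0 tau : R) (beta : 'I_K -> R)
  (p : 'I_K -> R) (k : 'I_K) : R :=
  Qh M Pt N0 tau beta p k - Pt * beta k.

(* One step of the distributed beacon power update:
   p_k[n+1] = min { Pmax, (qbar_k / q_k(p[n])) p_k[n] },  qbar_k = Qbar_k - Pt beta_k.
   (MathComp convention x / 0 = 0.) *)
Definition step (R : realType) (K M : nat) (Pt Pmax N0 tau : R) (beta Qbar : 'I_K -> R)
  (p : 'I_K -> R) : 'I_K -> R :=
  fun k => Num.min Pmax ((Qbar k - Pt * beta k) / qh M Pt N0 tau beta p k * p k).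

Definition fp_solution (R : realType) (K M : nat) (Pt Pmax N0 tau : R)
  (beta Qbar : 'I_K -> R) (p : 'I_K -> R) : Prop :=
  forall k : 'I_K, 0 <= p k <= Pmax /\
    (p k < Pmax -> Qh M Pt N0 tau beta p k = Qbar k) /\
    (p k = Pmax -> Qh M Pt N0 tau beta p k <= Qbar k).

(* Main.v *)
Require Import Defs.
From HB Require Import structures.
From mathcomp Require Import all_boot all_order all_algebra.
From mathcomp Require Import all_classical all_reals all_analysis.
From mathcomp Require Import ring lra.
Import Order.TTheory GRing.Theory Num.Theory.
Import numFieldNormedType.Exports.
Local Open Scope classical_set_scope.
Local Open Scope ring_scope.
Set Implicit Arguments. Unset Strict Implicit. Unset Printing Implicit Defensive.

Definition Sb (R : realType) (K : nat) (beta p : 'I_K -> R) := \sum_(l < K) p l * beta l.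
Definition aa (R : realType) (K M : nat) (Pt : R) (beta Qbar : 'I_K -> R) k :=
  (Qbar k - Pt * beta k) / (Pt * beta k ^+ 2 * (M%:R - 1)).
Definition Phi (R : realType) (K M : nat) (Pt Pmax N0 tau : R) (beta Qbar : 'I_K -> R)
  k (x : R) := Num.min Pmax (aa M Pt beta Qbar k * (x + N0 / tau)).
Definition Ifun (R : realType) (K M : nat) (Pt Pmax N0 tau : R) (beta Qbar : 'I_K -> R)
  (p : 'I_K -> R) := fun k => Phi M Pt Pmax N0 tau beta Qbar k (Sb beta p).
Definition Gf (R : realType) (K M : nat) (Pt Pmax N0 tau : R) (beta Qbar : 'I_K -> R)
  (x : R) := Sb beta (fun k => Phi M Pt Pmax N0 tau beta Qbar k x).

Lemma cvg_Phi (R : realType) (u : R^nat) (L P a c : R) :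
  u @ \oo --> L ->
  (fun n => Num.min P (a * (u n + c))) @ \oo --> Num.min P (a * (L + c)).
Proof.
move=> uL.
have -> : (fun n => Num.min P (a * (u n + c))) =
   (fun n => (P + a * (u n + c) - `|P - a * (u n + c)|) / 2).
  by apply: funext => n; rewrite minr_absE.
rewrite minr_absE.
have h : (fun n => a * (u n + c)) @ \oo --> a * (L + c).
  by apply: cvgMr; apply: cvgD => //; exact: cvg_cst.
apply: cvgM; last exact: cvg_cst.
apply: cvgB; first by apply: cvgD => //; exact: cvg_cst.
by apply: cvg_norm; apply: cvgB => //; exact: cvg_cst.
Qed.

Lemma cvg_sumI (R : realType) (K : nat) (f : 'I_K -> nat -> R) (l : 'I_K -> R) :
  (forall i, f i @ \oo --> l i) ->
  (fun n => \sum_(i < K) f i n) @ \oo --> \sum_(i < K) l i.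
Proof.
move=> h; apply: cvg_big => //.
exact: add_continuous.
Qed.

Lemma qh_eq (R : realType) (K M : nat) (Pt N0 tau : R) (beta p : 'I_K -> R) k :
  qh M Pt N0 tau beta p k = Pt * (p k * beta k ^+ 2 * (M%:R - 1)) / (Sb beta p + N0 / tau).
Proof. rewrite /qh /Qh. ring. Qed.

Lemma Qh_eq (R : realType) (K M : nat) (Pt N0 tau : R) (beta p : 'I_K -> R) k :
  Qh M Pt N0 tau beta p k = Pt * beta k +
     p k * (Pt * beta k ^+ 2 * (M%:R - 1)) / (Sb beta p + N0 / tau).
Proof. rewrite /Qh /Sb. ring. Qed.

Lemma Sb_ge0 (R : realType) (K : nat) (beta p : 'I_K -> R) :
  (forall k, 0 < beta k) -> (forall k, 0 <= p k) -> 0 <= Sb beta p.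
Proof.
by move=> b0 p0; rewrite /Sb sumr_ge0 // => i _; rewrite mulr_ge0 // ltW.
Qed.

Lemma X_gt0 (R : realType) (K M : nat) (Pt : R) (beta : 'I_K -> R) k :
  (2 <= M)%N -> 0 < Pt -> 0 < beta k -> 0 < Pt * beta k ^+ 2 * (M%:R - 1).
Proof.
move=> M2 Pt0 bk.
have m1 : 0 < M%:R - 1 :> R by rewrite subr_gt0 (@ltr_nat R 1 M).
by rewrite !mulr_gt0 // exprn_gt0.
Qed.

Lemma aa_ge0 (R : realType) (K M : nat) (Pt : R) (beta Qbar : 'I_K -> R) k :
  (2 <= M)%N -> 0 < Pt -> 0 < beta k -> Pt * beta k <= Qbar k ->
  0 <= aa M Pt beta Qbar k.
Proof.
move=> M2 Pt0 bk hq; rewrite /aa divr_ge0 ?subr_ge0 // ltW //.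
exact: X_gt0.
Qed.

Lemma step_eq (R : realType) (K M : nat) (Pt Pmax N0 tau : R) (beta Qbar p : 'I_K -> R) :
  (2 <= M)%N -> 0 < Pt -> 0 < Pmax -> 0 < N0 -> 0 < tau -> (forall k, 0 < beta k) ->
  (forall k, 0 <= p k /\ (p k = 0 -> Qbar k - Pt * beta k = 0)) ->
  step M Pt Pmax N0 tau beta Qbar p = Ifun M Pt Pmax N0 tau beta Qbar p.
Proof.
move=> M2 Pt0 Pm0 N00 tau0 b0 hp; apply: funext => k.
rewrite /step /Ifun /Phi qh_eq /aa.
have m1 : 0 < M%:R - 1 :> R.
  by rewrite subr_gt0 (@ltr_nat R 1 M).
have S0 : 0 <= Sb beta p by apply: Sb_ge0 => // i; case: (hp i).
have D0 : 0 < Sb beta p + N0 / tau by rewrite ltr_wpDl // divr_gt0.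
have bk := b0 k.
have [pk0 _] := hp k.
case: (eqVneq (p k) 0) => [e|ne].
  rewrite e (proj2 (hp k) e) !(mul0r, mulr0, invr0) //.
congr Num.min; field.
by rewrite ne !gt_eqF // ltr_wpDl // mulr_ge0 // ltW.
Qed.

Section Main.
Context (R : realType) (K M : nat) (Pt Pmax N0 tau : R) (beta Qbar : 'I_K -> R).
Hypotheses (M2 : (2 <= M)%N) (Pt0 : 0 < Pt) (Pm0 : 0 < Pmax) (N00 : 0 < N0)
  (tau0 : 0 < tau) (b0 : forall k, 0 < beta k) (hQ : forall k, Pt * beta k <= Qbar k).

Local Notation c := (N0 / tau).
Local Notation Ph := (Phi M Pt Pmax N0 tau beta Qbar).
Local Notation G := (Gf M Pt Pmax N0 tau beta Qbar).
Local Notation a := (aa M Pt beta Qbar).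

Lemma c_gt0 : 0 < c. Proof. by rewrite divr_gt0. Qed.

Lemma Phi_ge0 k (x : R) : 0 <= x -> 0 <= Ph k x.
Proof.
move=> x0; rewrite /Phi le_min (ltW Pm0) /= mulr_ge0 ?aa_ge0 //.
by rewrite addr_ge0 // ltW // c_gt0.
Qed.

Lemma Phi_le k (x : R) : Ph k x <= Pmax.
Proof. by rewrite /Phi ge_min lexx. Qed.

Lemma Phi_mono k (x y : R) : x <= y -> Ph k x <= Ph k y.
Proof.
move=> xy; rewrite /Phi le_min ge_min lexx /= ge_min.
rewrite ler_wpM2l ?orbT ?aa_ge0 // ?lerD2r //.
Qed.

Lemma Phi_zero k (x : R) : 0 <= x -> Ph k x = 0 -> Qbar k - Pt * beta k = 0.
Proof.
move=> x0; rewrite /Phi; case: lerP => h.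
  by move=> e; move: Pm0; rewrite e ltxx.
move/eqP; rewrite mulf_eq0 => /orP[|]; last first.
  by rewrite gt_eqF // ltr_wpDl // c_gt0.
rewrite /aa mulf_eq0 invr_eq0 => /orP[/eqP //|].
by rewrite gt_eqF // X_gt0.
Qed.

Lemma Phi_key k (x y : R) : 0 <= x -> x <= y -> Ph k y * (x + c) <= (y + c) * Ph k x.
Proof.
move=> x0 xy; have c0 := c_gt0; have a0 : 0 <= a k by rewrite aa_ge0.
rewrite /Phi; case: (lerP Pmax (a k * (x + c))) => h.
  have h2 : Pmax <= a k * (y + c).
    by rewrite (le_trans h) // ler_wpM2l // lerD2r.
  by rewrite (min_l h2) [_ * Pmax]mulrC ler_pM2l // lerD2r.
have hm : Num.min Pmax (a k * (y + c)) <= a k * (y + c) by rewrite ge_min lexx orbT.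
rewrite (_ : (y + c) * (a k * (x + c)) = a k * (y + c) * (x + c)); last by ring.
by rewrite ler_pM2r // (ltr_wpDl x0 c0).
Qed.

Lemma Gf_mono (x y : R) : x <= y -> G x <= G y.
Proof.
move=> xy; rewrite /Gf /Sb; apply: ler_sum => i _.
by apply: ler_wpM2r; [exact: ltW | exact: Phi_mono].
Qed.

Lemma Gf_key (x y : R) : 0 <= x -> x <= y -> G y * (x + c) <= (y + c) * G x.
Proof.
move=> x0 xy; rewrite /Gf /Sb mulr_suml mulr_sumr; apply: ler_sum => i _.
rewrite (_ : (y + c) * (Ph i x * beta i) = (y + c) * Ph i x * beta i); last by ring.
rewrite mulrAC; apply: ler_wpM2r; first exact: ltW.
exact: Phi_key.
Qed.

Lemma Gf_le (x y : R) : 0 <= x -> x <= y -> G x = x -> G y = y -> y <= x.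
Proof.
move=> x0 xy gx gy; have := Gf_key x0 xy; rewrite gx gy => h.
have c0 := c_gt0.
by rewrite mulrDr mulrDl [y * x]mulrC lerD2l [c * x]mulrC ler_pM2r // in h.
Qed.

Lemma Gf_uniq (x y : R) : 0 <= x -> 0 <= y -> G x = x -> G y = y -> x = y.
Proof.
move=> x0 y0 gx gy; case: (lerP x y) => h.
  by apply/eqP; rewrite eq_le h Gf_le.
by apply/eqP; rewrite eq_le Gf_le // ltW.
Qed.

Lemma fp_Phi p : fp_solution M Pt Pmax N0 tau beta Qbar p ->
  forall k, p k = Ph k (Sb beta p).
Proof.
move=> fp k.
have p0 : forall i, 0 <= p i by move=> i; case: (fp i) => /andP[].
have S0 := Sb_ge0 b0 p0.
have D0 : 0 < Sb beta p + c by rewrite ltr_wpDl // c_gt0.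
have X0 := X_gt0 (M:=M) M2 Pt0 (b0 k).
have m1 : 0 < M%:R - 1 :> R by rewrite subr_gt0 (@ltr_nat R 1 M).
have bk := b0 k.
have [/andP[pk0 pkP] [h1 h2]] := fp k.
rewrite /Phi /aa.
case: (ltrP (p k) Pmax) => hk.
  have := h1 hk; rewrite Qh_eq => e.
  have eq : (Qbar k - Pt * beta k) / (Pt * beta k ^+ 2 * (M%:R - 1)) * (Sb beta p + c) = p k.
    by rewrite -e; field; rewrite !gt_eqF // ltr_wpDl // mulr_ge0 // ltW.
  by rewrite eq min_r // ltW.
have ePk : p k = Pmax by apply/eqP; rewrite eq_le pkP.
have := h2 ePk; rewrite Qh_eq ePk -lerBrDl ler_pdivrMr // => h.
rewrite min_l // mulrAC ler_pdivlMr //.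
Qed.

Lemma Phi_fp p : 0 <= Sb beta p -> (forall k, p k = Ph k (Sb beta p)) ->
  fp_solution M Pt Pmax N0 tau beta Qbar p.
Proof.
move=> S0 hp k.
have D0 : 0 < Sb beta p + c by rewrite ltr_wpDl // c_gt0.
have X0 := X_gt0 (M:=M) M2 Pt0 (b0 k).
have m1 : 0 < M%:R - 1 :> R by rewrite subr_gt0 (@ltr_nat R 1 M).
have bk := b0 k.
split; first by rewrite hp Phi_ge0 // Phi_le.
rewrite Qh_eq.
have e := hp k; rewrite /Phi /aa in e.
set v := (Qbar k - Pt * beta k) / (Pt * beta k ^+ 2 * (M%:R - 1)) * (Sb beta p + c) in e.
case: (lerP Pmax v) => h.
  rewrite (min_l h) in e.
  split=> [hk|_]; first by move: hk; rewrite e ltxx.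
  rewrite e -lerBrDl ler_pdivrMr //.
  by move: h; rewrite /v mulrAC ler_pdivlMr.
rewrite (min_r (ltW h)) in e.
split=> [_|hk]; last by move: h; rewrite -e hk ltxx.
by rewrite e /v; field; rewrite !gt_eqF // ltr_wpDl // mulr_ge0 // ltW.
Qed.

End Main.

Theorem theorem1 (R : realType) (K M : nat) (Pt Pmax N0 tau : R)
  (beta Qbar : 'I_K -> R) (p : nat -> 'I_K -> R) :
  (1 <= K)%N -> (2 <= M)%N ->
  0 < Pt -> 0 < Pmax -> 0 < N0 -> 0 < tau ->
  (forall k, 0 < beta k) ->
  (forall k, Pt * beta k <= Qbar k) ->
  (forall k, 0 < p 0%N k <= Pmax) ->
  (forall n, p n.+1 = step M Pt Pmax N0 tau beta Qbar (p n)) ->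
  exists pstar : 'I_K -> R,
    (forall k, (fun n => p n k) @ \oo --> pstar k) /\
    step M Pt Pmax N0 tau beta Qbar pstar = pstar /\
    fp_solution M Pt Pmax N0 tau beta Qbar pstar /\
    (forall p' : 'I_K -> R, fp_solution M Pt Pmax N0 tau beta Qbar p' -> p' = pstar).
Proof.
move=> K1 M2 Pt0 Pm0 N00 tau0 b0 hQ hp0 hrec.
pose Ph := Phi M Pt Pmax N0 tau beta Qbar.
pose G := Gf M Pt Pmax N0 tau beta Qbar.
have inv : forall n, forall k, (0 <= p n k <= Pmax) /\
    (p n k = 0 -> Qbar k - Pt * beta k = 0).
  elim=> [|n IH] k.
    have /andP[h1 h2] := hp0 k; split; first by rewrite ltW.
    by move=> e; move: h1; rewrite e ltxx.
  have S0 : 0 <= Sb beta (p n) by apply: Sb_ge0 => // i; case: (IH i) => /andP[].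
  rewrite hrec step_eq //; last by move=> i; case: (IH i) => /andP[].
  split; first by rewrite Phi_ge0 // Phi_le.
  exact: Phi_zero.
have rec : forall n, p n.+1 = Ifun M Pt Pmax N0 tau beta Qbar (p n).
  move=> n; rewrite hrec step_eq // => i; by case: (inv n i) => /andP[].
pose s n := Sb beta (p n).
have sS : forall n, s n.+1 = G (s n) by move=> n; rewrite /s rec.
have s0 : forall n, 0 <= s n.
  by move=> n; apply: Sb_ge0 => // i; case: (inv n i) => /andP[].
pose B := \sum_(l < K) Pmax * beta l.
have sB : forall n, s n <= B.
  move=> n; rewrite /s /Sb /B; apply: ler_sum => i _.
  by rewrite ler_pM2r //; case: (inv n i) => /andP[].
have [L sL] : exists L : R, s @ \oo --> L.
  case: (lerP (s 0%N) (s 1%N)) => h.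
    have mono : forall n, s n <= s n.+1.
      elim=> [//|n IH]; rewrite [s n.+2]sS {1}[s n.+1]sS.
      exact: (Gf_mono Pmax N0 tau M2 Pt0 b0 hQ IH).
    exists (sup (range s)); apply: nondecreasing_cvgn.
      exact/nondecreasing_seqP.
    by exists B => _ [n _ <-].
  have mono : forall n, s n.+1 <= s n.
    elim=> [|n IH]; first exact: ltW.
    rewrite [s n.+2]sS {2}[s n.+1]sS.
    exact: (Gf_mono Pmax N0 tau M2 Pt0 b0 hQ IH).
  exists (inf (s @` setT)); apply: nonincreasing_cvgn.
    exact/nonincreasing_seqP.
  by exists 0 => _ [n _ <-].
have L0 : 0 <= L.
  apply: (ler_cvg_to (cvg_cst 0) sL); exact: nearW.
have GL : G L = L.
  have h1 : (fun n => s n.+1) @ \oo --> L by rewrite -cvg_shiftS in sL.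
  have h2 : (fun n => s n.+1) @ \oo --> G L.
    have -> : (fun n => s n.+1) = (fun n => G (s n)) by apply: funext => n; exact: sS.
    rewrite /G /Gf /Sb; apply: cvg_sumI => i; apply: cvgMl.
    exact: cvg_Phi.
  exact: (cvg_unique _ h2 h1).
pose pstar := fun k => Ph k L.
have Sst : Sb beta pstar = L by exact: GL.
exists pstar; split.
  move=> k; rewrite -cvg_shiftS.
  have -> : (fun n => p n.+1 k) = (fun n => Ph k (s n)) by apply: funext => n; rewrite rec.
  exact: cvg_Phi.
split.
  rewrite step_eq //; first by rewrite /Ifun Sst.
  move=> k; split; first exact: Phi_ge0.
  exact: Phi_zero.
split.
  by apply: Phi_fp => //; rewrite ?Sst // => k; rewrite Sst.
move=> p' fp.
have hp' := fp_Phi M2 Pt0 N00 tau0 b0 fp.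
have p0 : forall i, 0 <= p' i by move=> i; case: (fp i) => /andP[].
have S0 := Sb_ge0 b0 p0.
have e : (fun k => Ph k (Sb beta p')) = p' by apply: funext => k; exact: (esym (hp' k)).
have GS : G (Sb beta p') = Sb beta p' by rewrite /G /Gf e.
have eS := Gf_uniq M2 Pt0 Pm0 N00 tau0 b0 hQ S0 L0 GS GL.
by apply: funext => k; rewrite hp' eS.
Qed.
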